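(* For every integer $r\ge 1$, every line passing through two distinct points of $P_r$ has slope at most the slope of $\ell_r$; that is, among the lines passing through two points of $P_r$, $\ell_r$ is the line with the largest slope.
   Context: Define finite sets $P_r\subset\mathbb{Z}^2$ for integers $r\ge 0$ recursively: $P_0:=\{(0,0)\}$; for $r\ge 1$, $L_r:=P_{r-1}$, $R_r:=\{(x+\delta_r,\,y+\delta_r'):(x,y)\in L_r\}$ and $P_r:=L_r\cup R_r$, where $\delta_r:=3\cdot 4^{r-1}$ and $\delta_r':=(3r+1)\cdot 4^{r-1}$. For $r\ge 1$, let $p_r$ be the rightmost point (largest $x$-coordinate) of $L_r$, let $q_r$ be the leftmost point (smallest $x$-coordinate) of $R_r$, and let $\ell_r$ be the straight line through $p_r$ and $q_r$. *)

(* Defs.v *)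
From mathcomp Require Import all_boot all_order all_algebra.
Set Implicit Arguments. Unset Strict Implicit. Unset Printing Implicit Defensive.
Import Order.TTheory GRing.Theory Num.Theory.
Local Open Scope ring_scope.

Definition point := (int * int)%type.

Definition delta (r : nat) : int := (3 * 4 ^ r.-1)%N%:Z.
Definition delta' (r : nat) : int := ((3 * r + 1) * 4 ^ r.-1)%N%:Z.

Definition shift (r : nat) (z : point) : point := (z.1 + delta r, z.2 + delta' r).

Fixpoint P (r : nat) : seq point :=
  match r with
  | 0%N => [:: (0, 0)]
  | r'.+1 => P r' ++ map (shift r'.+1) (P r')
  end.

Definition L (r : nat) : seq point := P r.-1.
Definition R (r : nat) : seq point := map (shift r) (P r.-1).

(* slope of the line through a and b (meaningful when a.1 <> b.1) *)
Definition slope (a b : point) : rat :=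
  ((b.2 - a.2)%:~R : rat) / ((b.1 - a.1)%:~R : rat).

(* Main.v *)
Require Import Defs.
From mathcomp Require Import all_boot all_order all_algebra.
From mathcomp Require Import zify ring lra.
Import Order.TTheory GRing.Theory Num.Theory.
Local Open Scope ring_scope.

Lemma deltaS r : delta r.+1 = 3 * (4 ^ r)%:Z.
Proof. by rewrite /delta /= PoszM. Qed.
Lemma delta'S r : delta' r.+1 = (3 * r%:Z + 4) * (4 ^ r)%:Z.
Proof. rewrite /delta' /= PoszM; congr (_ * _); lia. Qed.
Lemma pow4S m : (4 ^ m.+1)%:Z = 4 * (4 ^ m)%:Z.
Proof. by rewrite expnS PoszM. Qed.
Lemma pow4_gt0 m : 0 < (4 ^ m)%:Z.
Proof. by rewrite ltz_nat expn_gt0. Qed.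

Lemma Pbound m (n d : int) (x y : int) : 0 <= d -> (3 * m%:Z + 1) * d <= 3 * n ->
  (x, y) \in P m -> 0 <= n * x - d * y <= n * ((4 ^ m)%:Z - 1) - d * m%:Z * (4 ^ m)%:Z.
Proof.
move=> hd; elim: m x y => [|m IH] x y hc /=.
  by rewrite inE => /eqP [-> ->]; rewrite expn0; apply/andP; split; nia.
have hc' : (3 * m%:Z + 1) * d <= 3 * n by nia.
have W0 := pow4_gt0 m; rewrite pow4S.
set W := (4 ^ m)%:Z in W0 IH *.
have h : 0 <= (3 * n - (3 * m%:Z + 4) * d) * W.
  by apply: mulr_ge0; lia.
have -> : (m.+1)%:Z = m%:Z + 1 by lia.
rewrite mem_cat => /orP [hz | /mapP [[x' y'] hc2 [-> ->]]].
  have /andP [h1 h2] := IH x y hc' hz; apply/andP; split; nia.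
have /andP [h1 h2] := IH x' y' hc' hc2.
rewrite deltaS delta'S -/W; apply/andP; split; nia.
Qed.

Lemma xbound m (x y : int) : (x, y) \in P m -> 0 <= x <= (4 ^ m)%:Z - 1.
Proof. move=> h; have hc : (3 * m%:Z + 1) * 0 <= 3 * 1 by rewrite mulr0.
have := @Pbound m 1 0 x y (lexx 0) hc h; lia. Qed.

Arguments xbound {m x y}.
Arguments Pbound {m n d x y}.
Lemma xinj m (x y x' y' : int) : (x, y) \in P m -> (x', y') \in P m -> x = x' -> y = y'.
Proof.
elim: m x y x' y' => [|m IH] x y x' y' /=.
  by rewrite !inE => /eqP [_ ->] /eqP [_ ->].
have W0 := pow4_gt0 m.
rewrite !mem_cat => /orP [h | /mapP [[a b] h [-> ->]]] /orP [h' | /mapP [[a' b'] h' [-> ->]]].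
- by apply: IH.
- move: (xbound h) (xbound h'); rewrite deltaS; lia.
- move: (xbound h) (xbound h'); rewrite deltaS; lia.
- move=> e; rewrite (IH _ _ _ _ h h') //; lia.
Qed.

Arguments xinj {m x y x' y'}.
Lemma zeroP m : (0, 0) \in P m.
Proof. by elim: m => [|m IH] //=; rewrite mem_cat IH. Qed.

Lemma fullP m : ((4 ^ m)%:Z - 1, m%:Z * (4 ^ m)%:Z) \in P m.
Proof.
elim: m => [|m IH] //=; rewrite mem_cat; apply/orP; right; apply/mapP.
exists ((4 ^ m)%:Z - 1, m%:Z * (4 ^ m)%:Z) => //.
rewrite /shift /= deltaS delta'S pow4S; congr (_, _); lia.
Qed.

Lemma mono (X Y T k : int) : 0 < T -> 0 < X -> 0 <= k -> Y * (2 * T + 1) <= k * T * X ->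
  Y * (2 * (4 * T) + 1) <= (k + 2) * (4 * T) * X.
Proof.
move=> T0 X0 k0 h; case: (lerP Y 0) => hY.
  have : 0 <= (k + 2) * (4 * T) * X by apply: mulr_ge0; [apply: mulr_ge0|]; lia.
  nia.
have h1 : Y * (2 * (4 * T) + 1) <= 4 * (Y * (2 * T + 1)) by nia.
have h2 : 0 <= 2 * (4 * T) * X by apply: mulr_ge0; [apply: mulr_ge0|]; lia.
nia.
Qed.

Lemma claim r (a1 a2 b1 b2 : int) : (a1, a2) \in P r -> (b1, b2) \in P r -> a1 < b1 ->
  (b2 - a2) * (2 * (4 ^ r.-1)%:Z + 1) <= (2 * r%:Z + 2) * (4 ^ r.-1)%:Z * (b1 - a1).
Proof.
elim: r a1 a2 b1 b2 => [|r IH] a1 a2 b1 b2 /=.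
  by rewrite !inE => /eqP [-> _] /eqP [-> _]; rewrite ltxx.
have inner : forall c1 c2 d1 d2 : int, (c1, c2) \in P r -> (d1, d2) \in P r -> c1 < d1 ->
  (d2 - c2) * (2 * (4 ^ r)%:Z + 1) <= (2 * r.+1%:Z + 2) * (4 ^ r)%:Z * (d1 - c1).
  case: r IH => [|r] IH c1 c2 d1 d2 hc hd hlt.
    by move: hc hd; rewrite /= !inE => /eqP [e1 _] /eqP [e2 _]; lia.
  have h := IH _ _ _ _ hc hd hlt; rewrite /= in h; rewrite pow4S.
  have -> : (r.+2)%:Z = r.+1%:Z + 1 by lia.
  have -> : 2 * (r.+1%:Z + 1) + 2 = 2 * r.+1%:Z + 2 + 2 by lia.
  apply: (@mono (d1 - c1) (d2 - c2) (4 ^ r)%:Z (2 * r.+1%:Z + 2) (pow4_gt0 r)) => //; lia.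
have T0 := pow4_gt0 r; set T := (4 ^ r)%:Z in T0 inner *.
have hrT : r%:Z < T by rewrite ltz_nat ltn_expl.
have E : r.+1%:Z = r%:Z + 1 by lia. rewrite E in inner *.
set n := (2 * (r%:Z + 1) + 2) * T.
set d := 2 * T + 1.
have hcond : (3 * r%:Z + 1) * d <= 3 * n by rewrite /n /d; nia.
have hd : 0 <= d by rewrite /d; lia.
have hid : n * (2 * T + 1) = d * (2 * r%:Z + 4) * T by rewrite /n /d; ring.
rewrite !mem_cat => /orP [h | /mapP [[a b] h [-> ->]]] /orP [h' | /mapP [[a' b'] h' [-> ->]]].
- by apply: inner.
- rewrite deltaS delta'S -/T => _.
  have /andP [u1 u2] := Pbound hd hcond h.
  have /andP [v1 v2] := Pbound hd hcond h'.
  rewrite -/d -/n; lia.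
- move: (xbound h) (xbound h'); rewrite deltaS -/T; lia.
- rewrite deltaS delta'S -/T => hlt.
  have -> : b' + (3 * r%:Z + 4) * T - (b + (3 * r%:Z + 4) * T) = b' - b by ring.
  have -> : a' + 3 * T - (a + 3 * T) = a' - a by ring.
  apply: inner h h' _; lia.
Qed.

Arguments claim {r a1 a2 b1 b2}.
Lemma slope_le (X Y U V : int) : 0 < X -> 0 < V -> Y * V <= U * X ->
  (Y%:~R : rat) / X%:~R <= U%:~R / V%:~R.
Proof.
move=> X0 V0 h.
rewrite ler_pdivrMr ?ltr0z // mulrAC ler_pdivlMr ?ltr0z // -!intrM ler_int //.
Qed.

Lemma slope_sym a b : slope a b = slope b a.
Proof. by rewrite /slope -(opprB b.2) -(opprB b.1) !intrN invrN mulrNN. Qed.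

Theorem lemma1 (r : nat) (hr : (1 <= r)%N) (p q : point)
  (hp : p \in L r) (hpmax : forall z, z \in L r -> z.1 <= p.1)
  (hq : q \in R r) (hqmin : forall z, z \in R r -> q.1 <= z.1) :
  forall a b : point, a \in P r -> b \in P r -> a <> b ->
    a.1 <> b.1 /\ slope a b <= slope p q.
Proof.
case: r hr hp hpmax hq hqmin => [//|k] _; rewrite /L /R /=.
case: p => p1 p2; case: q => q1 q2 hp hpmax hq hqmin /=.
have T0 := pow4_gt0 k; set T := (4 ^ k)%:Z in T0.
have hp1 : p1 = T - 1.
  have := hpmax _ (fullP k); have := xbound hp; rewrite /= -/T; lia.
have hp2 : p2 = k%:Z * T by have := xinj hp (fullP k); rewrite -/T; apply.
move: hq hqmin => /mapP [[c1 c2] hc [-> ->]] hqmin.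
have hc1 : c1 = 0.
  have := hqmin _ (map_f (shift k.+1) (zeroP k)); have := xbound hc; rewrite /= ; lia.
have hc2 : c2 = 0 by have := xinj hc (zeroP k); apply.
have key : forall a1 a2 b1 b2 : int, (a1, a2) \in P k.+1 -> (b1, b2) \in P k.+1 -> a1 < b1 ->
    slope (a1, a2) (b1, b2) <= slope (p1, p2) (shift k.+1 (c1, c2)).
  move=> a1 a2 b1 b2 ha hb hlt; have := claim ha hb hlt; rewrite /= -/T => h.
  rewrite /slope /= deltaS delta'S -/T hp1 hp2 hc1 hc2.
  apply: slope_le; [lia | lia | nia].
case=> [a1 a2] [b1 b2] ha hb hne /=.
have hne1 : a1 <> b1 by move=> e; apply: hne; rewrite e (xinj (m:=k.+1) ha hb e).
split => //.
case: (ltgtP a1 b1) => hab; last by [].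
- exact: (key _ _ _ _ ha hb).
- by rewrite slope_sym; apply: (key _ _ _ _ hb ha).
Qed.
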